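(* Let \(1 \le \ell < n\) be positive integers. Then \[ {}_2F_2\left(\begin{matrix} \frac{n-1}{n}\ell + 1, & 1 \\ \ell+2, & \frac{n-1}{n}\ell+3 \end{matrix}\,;\, \frac{\ell}{n}\right) = (\ell+1)!\,\frac{n^{\ell+1}}{\ell^{\ell+1}}\,\frac{\Gamma\!\left(\frac{n-1}{n}\ell+3\right)}{\Gamma\!\left(\frac{n-1}{n}\ell+1\right)}\left[\frac{n}{\ell}\left(\sum_{k=0}^{\ell}\frac{\ell^k}{k!\,n^k} - e^{\ell/n}\right) + \frac{\ell^{\ell-1}}{(\ell-1)!\,n^{\ell-1}}\cdot\frac{1}{(n+1)(\ell+1)-1-2\ell}\right]. \]
   Context: \({}_pF_q\) denotes the generalized hypergeometric series and \(\Gamma\) the Gamma function. This special value is used to evaluate, via Waadeland's tail theorem, the continued fraction whose partial numerators are \(-z(m+nz)\) and partial denominators \(m+(n+1)z+2\), at \(z=\ell/n\). *)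

(* Defs.v *)
From Stdlib Require Import Reals Factorial.
From Coquelicot Require Import Coquelicot.
Open Scope R_scope.

Fixpoint poch (a : R) (k : nat) : R :=
  match k with
  | O => 1
  | S k' => poch a k' * (a + INR k')
  end.

Definition hyp2F2 (a1 a2 b1 b2 z : R) : R :=
  Series (fun k => poch a1 k * poch a2 k / (poch b1 k * poch b2 k)
                   * z ^ k / INR (fact k)).

Definition Gamma (x : R) : R :=
  RInt_gen (fun t => Rpower t (x - 1) * exp (- t))
           (at_right 0) (Rbar_locally p_infty).

(* Main.v *)
Require Import Defs.
From Stdlib Require Import Reals Factorial.
From Coquelicot Require Import Coquelicot.
From Stdlib Require Import Lra Lia.
Open Scope R_scope.

Definition fpow (c t : R) := Rpower t c * exp (- t).

Lemma Rpower_pos' t c : 0 < Rpower t c.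
Proof. unfold Rpower. apply exp_pos. Qed.

Lemma fpow_pos c t : 0 < fpow c t.
Proof. unfold fpow. apply Rmult_lt_0_compat. apply Rpower_pos'. apply exp_pos. Qed.

Lemma fpow_derive c t : 0 < t ->
  is_derive (fpow c) t (c * Rpower t (c-1) * exp(-t) - Rpower t c * exp(-t)).
Proof.
  intros Ht. unfold fpow.
  replace (c * Rpower t (c-1) * exp(-t) - Rpower t c * exp(-t)) with
    ((c * Rpower t (c-1)) * exp(-t) + Rpower t c * (-exp(-t))) by ring.
  apply (is_derive_mult (fun t => Rpower t c) (fun t => exp (-t))).
  - apply is_derive_Reals. apply derivable_pt_lim_power. exact Ht.
  - auto_derive. auto. ring.
  - intros; apply Rmult_comm.
Qed.

Lemma fpow_cont c t : 0 < t -> continuous (fpow c) t.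
Proof.
  intros Ht. apply (ex_derive_continuous (K:=R_AbsRing) (V:=R_NormedModule)). eexists. apply fpow_derive. exact Ht.
Qed.

Lemma Rpower_le1 t c : 0 < t <= 1 -> 0 <= c -> Rpower t c <= 1.
Proof.
  intros [H0 H1] Hc. unfold Rpower. rewrite <- exp_0.
  destruct (Rle_lt_or_eq_dec _ _ Hc) as [Hc'|Hc'].
  2:{ subst. rewrite Rmult_0_l. lra. }
  destruct (Rle_lt_or_eq_dec _ _ H1) as [H1'|H1'].
  - left. apply exp_increasing. assert (ln t < 0). { rewrite <- ln_1. apply ln_increasing; lra. } nra.
  - subst. rewrite ln_1. rewrite Rmult_0_r. lra.
Qed.

Lemma fpow_le1 c t : 0 <= c -> 0 < t <= 1 -> fpow c t <= 1.
Proof.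
  intros Hc Ht. unfold fpow.
  assert (exp (-t) <= 1). { rewrite <- exp_0. destruct (Rle_lt_or_eq_dec 0 t) ; try lra. left; apply exp_increasing; lra. }
  pose proof (Rpower_le1 t c Ht Hc). pose proof (Rpower_pos' t c). pose proof (exp_pos (-t)). nra.
Qed.

Lemma exp_ge_pow x K : 0 <= x -> x ^ K / INR (fact K) <= exp x.
Proof.
  intros Hx. eapply Rle_trans. 2: apply (exp_ge_taylor x K Hx).
  destruct K. simpl. lra.
  rewrite tech5.
  assert (0 <= sum_f_R0 (fun k : nat => x ^ k / INR (fact k)) K).
  { apply cond_pos_sum. intros. apply Rle_mult_inv_pos. apply pow_le; auto. apply INR_fact_lt_0. }
  lra.
Qed.

Lemma fpow_tail c : 0 <= c -> exists B, 0 < B /\ forall t, 1 <= t -> fpow c t <= B / (t*t).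
Proof.
  intros Hc.
  destruct (INR_archimed 1 c) as [K HK]; [lra|]. rewrite Rmult_1_r in HK.
  exists (INR (fact (K+2))). split. apply INR_fact_lt_0.
  intros t Ht. unfold fpow.
  assert (H1 : Rpower t c <= t ^ K).
  { rewrite <- Rpower_pow by lra. apply Rle_Rpower; lra. }
  assert (H2 := exp_ge_pow t (K+2) ltac:(lra)).
  rewrite exp_Ropp.
  assert (Hf := INR_fact_lt_0 (K+2)).
  assert (Hp : 0 < t ^ K) by (apply pow_lt; lra).
  rewrite pow_add in H2. simpl in H2.
  assert (He := exp_pos t).
  apply (Rmult_le_reg_r (exp t * (t*t))). apply Rmult_lt_0_compat; nra.
  replace (Rpower t c * / exp t * (exp t * (t * t))) with (Rpower t c * (t*t)) by (field; lra).
  replace (INR (fact (K + 2)) / (t * t) * (exp t * (t * t))) with (INR (fact (K + 2)) * exp t) by (field; lra).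
  apply Rle_trans with (t^K * (t*t)). apply Rmult_le_compat_r; [nra | exact H1].
  apply (Rmult_le_reg_r (/ INR (fact (K + 2)))). apply Rinv_0_lt_compat; lra.
  replace (INR (fact (K + 2)) * exp t * / INR (fact (K + 2))) with (exp t) by (field; lra).
  unfold Rdiv in H2. lra.
Qed.


Lemma ex_fpow c a b : 0 < a -> 0 < b -> ex_RInt (fpow c) a b.
Proof.
  intros Ha Hb. apply (ex_RInt_continuous (V:=R_CompleteNormedModule)). intros z [Hz _].
  apply fpow_cont. eapply Rlt_le_trans; [|exact Hz]. apply Rmin_glb_lt; auto.
Qed.

Lemma RInt_swapR (f : R -> R) a b : ex_RInt f a b -> RInt f b a = - RInt f a b.
Proof. intros H. rewrite <- (opp_RInt_swap f a b H). reflexivity. Qed.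

Lemma chasR c a b d : 0 < a -> 0 < b -> 0 < d ->
  RInt (fpow c) a b + RInt (fpow c) b d = RInt (fpow c) a d.
Proof. intros. apply (RInt_Chasles (fpow c) a b d); apply ex_fpow; auto. Qed.

Lemma near0 c a b : 0 <= c -> 0 < a <= 1 -> 0 < b <= 1 ->
  Rabs (RInt (fpow c) a b) <= Rabs (b - a).
Proof.
  intros Hc Ha Hb.
  assert (K : forall a b, 0 < a <= 1 -> 0 < b <= 1 -> a <= b -> Rabs (RInt (fpow c) a b) <= Rabs (b - a)).
  { clear a b Ha Hb. intros a b Ha Hb Hab.
    rewrite (Rabs_right (b - a)) by lra.
    replace (b - a) with ((b - a) * 1) by ring.
    apply abs_RInt_le_const; auto. apply ex_fpow; lra.
    intros t Ht. rewrite Rabs_right. apply fpow_le1; auto; lra.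
    left; apply fpow_pos. }
  destruct (Rle_dec a b). apply K; auto.
  rewrite RInt_swapR by (apply ex_fpow; lra). rewrite Rabs_Ropp.
  rewrite Rabs_minus_sym. apply K; auto; lra.
Qed.

Lemma RInt_inv2 B a b : 0 < a -> 0 < b -> RInt (fun t => B / (t*t)) a b = B / a - B / b.
Proof.
  intros Ha Hb.
  apply is_RInt_unique.
  replace (B / a - B / b) with (minus ((fun t => - B / t) b) ((fun t => - B / t) a))
    by (unfold minus, plus, opp; simpl; field; lra).
  assert (Hm : 0 < Rmin a b) by (apply Rmin_glb_lt; auto).
  apply (is_RInt_derive (V := R_CompleteNormedModule)).
  - intros x [Hx _]. auto_derive. lra. field. lra.
  - intros x [Hx _]. apply (ex_derive_continuous (K:=R_AbsRing) (V:=R_NormedModule)).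
    auto_derive. nra.
Qed.

Lemma tailb c B a b : 0 < B -> (forall t, 1 <= t -> fpow c t <= B / (t*t)) ->
  1 <= a -> 1 <= b -> Rabs (RInt (fpow c) a b) <= B / a + B / b.
Proof.
  intros HB HtB Ha Hb.
  assert (K : forall a b, 1 <= a -> 1 <= b -> a <= b -> Rabs (RInt (fpow c) a b) <= B / a + B / b).
  { clear a b Ha Hb. intros a b Ha Hb Hab.
    assert (0 <= RInt (fpow c) a b).
    { apply RInt_ge_0; auto. apply ex_fpow; lra. intros; left; apply fpow_pos. }
    assert (RInt (fpow c) a b <= RInt (fun t => B / (t*t)) a b).
    { apply RInt_le; auto. apply ex_fpow; lra.
      apply (ex_RInt_continuous (V:=R_CompleteNormedModule)). intros z [Hz _].
      apply (ex_derive_continuous (K:=R_AbsRing) (V:=R_NormedModule)).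
      assert (0 < z). { eapply Rlt_le_trans; [|exact Hz]. apply Rmin_glb_lt; lra. }
      auto_derive. nra.
      intros x Hx. apply HtB. lra. }
    rewrite RInt_inv2 in H0 by lra.
    assert (0 < B / b) by (apply Rdiv_lt_0_compat; lra).
    rewrite Rabs_right by lra. lra. }
  destruct (Rle_dec a b). apply K; auto.
  rewrite RInt_swapR by (apply ex_fpow; lra). rewrite Rabs_Ropp.
  rewrite Rplus_comm. apply K; auto; lra.
Qed.

Lemma at_right0_ev d : 0 < d -> at_right 0 (fun x => 0 < x < d).
Proof.
  intros Hd. exists (mkposreal d Hd). intros y Hy Hy0. split; auto.
  change (Rabs (y - 0) < d) in Hy. rewrite Rminus_0_r, Rabs_right in Hy; lra.
Qed.

Lemma fpow_gen_ex c : 0 <= c -> exists v, is_RInt_gen (fpow c) (at_right 0) (Rbar_locally p_infty) v.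
Proof.
  intros Hc.
  destruct (fpow_tail c Hc) as [B [HB HtB]].
  unfold is_RInt_gen.
  refine (proj1 (filterlimi_locally_cauchy (U := R_CompleteSpace) (F := filter_prod (at_right 0) (Rbar_locally p_infty)) (fun ab y => is_RInt (fpow c) (fst ab) (snd ab) y) _) _).
  - apply Filter_prod with (fun x => 0 < x < 1) (fun y => 1 < y).
    apply at_right0_ev; lra. exists 1; auto.
    intros x y Hx Hy; simpl. split.
    + exists (RInt (fpow c) x y). apply (RInt_correct (V:=R_CompleteNormedModule)). apply ex_fpow; lra.
    + intros y1 y2 H1 H2. rewrite <- (is_RInt_unique (V:=R_CompleteNormedModule) _ _ _ _ H1). rewrite <- (is_RInt_unique (V:=R_CompleteNormedModule) _ _ _ _ H2). auto.
  - intros eps.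
    set (d := Rmin 1 (eps/2)). set (M := Rmax 1 (4 * B / eps)).
    assert (Hd : 0 < d) by (apply Rmin_glb_lt; destruct eps; simpl; lra).
    assert (Hd1 : d <= 1) by apply Rmin_l. assert (Hd2 : d <= eps / 2) by apply Rmin_r.
    assert (HM1 : 1 <= M) by apply Rmax_l. assert (HM2 : 4 * B / eps <= M) by apply Rmax_r.
    assert (Heps := cond_pos eps).
    exists (fun ab => 0 < fst ab < d /\ M < snd ab). split.
    + apply Filter_prod with (fun x => 0 < x < d) (fun y => M < y).
      apply at_right0_ev; lra. exists M; auto. intros; simpl; auto.
    + intros [u1 u2] [v1 v2] [Hu1 Hu2] [Hv1 Hv2] u' v' Hu Hv. simpl in *.
      apply (is_RInt_unique (V:=R_CompleteNormedModule)) in Hu. apply (is_RInt_unique (V:=R_CompleteNormedModule)) in Hv. subst u' v'.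
      change (Rabs (RInt (fpow c) v1 v2 - RInt (fpow c) u1 u2) < eps).
      rewrite <- (chasR c v1 u1 v2) by lra. rewrite <- (chasR c u1 u2 v2) by lra.
      replace (RInt (fpow c) v1 u1 + (RInt (fpow c) u1 u2 + RInt (fpow c) u2 v2) - RInt (fpow c) u1 u2)
        with (RInt (fpow c) v1 u1 + RInt (fpow c) u2 v2) by ring.
      eapply Rle_lt_trans. apply Rabs_triang.
      assert (A1 := near0 c v1 u1 Hc ltac:(lra) ltac:(lra)).
      assert (A2 := tailb c B u2 v2 HB HtB ltac:(lra) ltac:(lra)).
      assert (Rabs (u1 - v1) < eps / 2).
      { apply Rabs_def1; lra. }
      assert (HMe : 4 * B <= M * eps).
      { replace (4*B) with (4*B/eps*eps) by (field; lra). apply Rmult_le_compat_r; lra. }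
      assert (B / u2 < eps/4).
      { apply (Rmult_lt_reg_r u2); [lra|]. replace (B/u2*u2) with B by (field; lra). nra. }
      assert (B / v2 < eps/4).
      { apply (Rmult_lt_reg_r v2); [lra|]. replace (B/v2*v2) with B by (field; lra). nra. }
      lra.
Qed.


Lemma fpow_S c t : 0 < t -> fpow (c+1) t = t * fpow c t.
Proof. intros. unfold fpow. rewrite Rpower_plus, Rpower_1 by auto. ring. Qed.

Lemma deriv_g c t : 0 < t ->
  is_derive (fun t => - fpow (c+1) t) t (fpow (c+1) t - (c+1) * fpow c t).
Proof.
  intros Ht.
  replace (fpow (c+1) t - (c+1) * fpow c t) with
    (opp ((c+1) * Rpower t (c+1-1) * exp(-t) - Rpower t (c+1) * exp(-t))).
  apply (is_derive_opp (fun t => fpow (c+1) t)). apply fpow_derive; auto.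
  unfold opp; simpl. replace (c+1-1) with c by ring. unfold fpow. ring.
Qed.

Lemma ball0R (eps : posreal) x : Rabs x < eps -> ball 0 eps x.
Proof. intros H. change (Rabs (x - 0) < eps). rewrite Rminus_0_r. exact H. Qed.

Lemma fpow_rec c v : 0 <= c ->
  is_RInt_gen (fpow c) (at_right 0) (Rbar_locally p_infty) v ->
  is_RInt_gen (fpow (c+1)) (at_right 0) (Rbar_locally p_infty) ((c+1) * v).
Proof.
  intros Hc Hv.
  set (g := fun t => - fpow (c+1) t).
  assert (Hg : is_RInt_gen (Derive g) (at_right 0) (Rbar_locally p_infty) (0 - 0)).
  { apply is_RInt_gen_Derive.
    - apply Filter_prod with (fun x => 0 < x < 1) (fun y => 1 < y).
      apply at_right0_ev; lra. exists 1; auto.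
      intros x y Hx Hy z [Hz _]. simpl in Hz.
      assert (0 < z). { eapply Rlt_le_trans; [|exact Hz]. apply Rmin_glb_lt; lra. }
      eexists. apply deriv_g; auto.
    - apply Filter_prod with (fun x => 0 < x < 1) (fun y => 1 < y).
      apply at_right0_ev; lra. exists 1; auto.
      intros x y Hx Hy z [Hz _]. simpl in Hz.
      assert (Hz0 : 0 < z). { eapply Rlt_le_trans; [|exact Hz]. apply Rmin_glb_lt; lra. }
      apply continuous_ext_loc with (fun t => fpow (c+1) t - (c+1) * fpow c t).
      + assert (Hz2 : 0 < z / 2) by lra.
        exists (mkposreal _ Hz2). intros y0 Hy0. change (Rabs (y0 - z) < z/2) in Hy0.
        apply Rabs_def2 in Hy0.
        symmetry. apply is_derive_unique. apply deriv_g. lra.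
      + apply (continuous_minus (fun t => fpow (c+1) t) (fun t => (c+1) * fpow c t)).
        apply fpow_cont; auto.
        apply (continuous_scal_r (c+1) (fun t => fpow c t)). apply fpow_cont; auto.
    - apply filterlim_locally. intros eps.
      assert (He := cond_pos eps).
      apply filter_imp with (fun x => 0 < x < Rmin 1 eps).
      + intros x Hx. apply ball0R. unfold g. rewrite Rabs_Ropp. rewrite fpow_S by lra.
        assert (Rmin 1 eps <= 1) by apply Rmin_l. assert (Rmin 1 eps <= eps) by apply Rmin_r.
        assert (H1 := fpow_le1 c x Hc ltac:(lra)). assert (H2 := fpow_pos c x).
        rewrite Rabs_right by nra. nra.
      + apply at_right0_ev. apply Rmin_glb_lt; lra.
    - apply filterlim_locally. intros eps.
      assert (He := cond_pos eps).
      destruct (fpow_tail (c+1) ltac:(lra)) as [B [HB HtB]].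
      exists (Rmax 1 (B / eps)). intros x Hx.
      assert (Rmax 1 (B/eps) >= 1) by (apply Rle_ge, Rmax_l).
      assert (Rmax 1 (B/eps) >= B/eps) by (apply Rle_ge, Rmax_r).
      apply ball0R. unfold g. rewrite Rabs_Ropp.
      assert (H2 := fpow_pos (c+1) x). rewrite Rabs_right by lra.
      eapply Rle_lt_trans. apply HtB; lra.
      apply (Rmult_lt_reg_r (x*x)). nra. replace (B / (x*x) * (x*x)) with B by (field; lra).
      assert (B < eps * x).
      { replace B with (B/eps*eps) by (field; lra). nra. }
      nra. }
  assert (Hs := is_RInt_gen_scal _ (c+1) _ Hv).
  assert (Hp := is_RInt_gen_plus _ _ _ _ Hs Hg).
  replace ((c+1) * v) with (plus (scal (c+1) v) (0 - 0)).
  2:{ change (scal (c+1) v) with ((c+1) * v). unfold plus; simpl. ring. }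
  eapply is_RInt_gen_ext. 2: exact Hp.
  apply Filter_prod with (fun x => 0 < x < 1) (fun y => 1 < y).
  apply at_right0_ev; lra. exists 1; auto.
  intros x y Hx Hy z [Hz _]. simpl in Hz.
  assert (Hz0 : 0 < z). { eapply Rlt_trans; [|exact Hz]. apply Rmin_glb_lt; lra. }
  rewrite (is_derive_unique g z _ (deriv_g c z Hz0)).
  change (scal (c+1) (fpow c z)) with ((c+1) * fpow c z). unfold plus; simpl. ring.
Qed.

Lemma fpow_gen_pos c v : 0 <= c ->
  is_RInt_gen (fpow c) (at_right 0) (Rbar_locally p_infty) v -> 0 < v.
Proof.
  intros Hc Hv.
  set (c0 := RInt (fpow c) 1 2).
  assert (Hc0 : 0 < c0).
  { apply RInt_gt_0. lra. intros; apply fpow_pos. intros; apply fpow_cont; lra. }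
  assert (Hc2 : 0 < c0 / 2) by lra.
  assert (H := Hv (ball v (mkposreal _ Hc2)) (locally_ball v (mkposreal _ Hc2))).
  unfold filtermapi in H.
  assert (H2 : filter_prod (at_right 0) (Rbar_locally p_infty) (fun ab => 0 < fst ab < 1 /\ 2 < snd ab)).
  { apply Filter_prod with (fun x => 0 < x < 1) (fun y => 2 < y).
    apply at_right0_ev; lra. exists 2; auto. intros; simpl; auto. }
  destruct (filter_ex _ (filter_and _ _ H H2)) as [[x1 x2] [[y [Hy Hb]] [Hx1 Hx2]]].
  simpl in *.
  apply (is_RInt_unique (V:=R_CompleteNormedModule)) in Hy. subst y.
  change (Rabs (RInt (fpow c) x1 x2 - v) < c0/2) in Hb.
  rewrite <- (chasR c x1 1 x2) in Hb by lra. rewrite <- (chasR c 1 2 x2) in Hb by lra.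
  assert (0 <= RInt (fpow c) x1 1).
  { apply RInt_ge_0; try lra. apply ex_fpow; lra. intros; left; apply fpow_pos. }
  assert (0 <= RInt (fpow c) 2 x2).
  { apply RInt_ge_0; try lra. apply ex_fpow; lra. intros; left; apply fpow_pos. }
  fold c0 in Hb. apply Rabs_def2 in Hb. lra.
Qed.


Lemma Gamma_fpow x v : 0 <= x - 1 ->
  is_RInt_gen (fpow (x - 1)) (at_right 0) (Rbar_locally p_infty) v -> Gamma x = v.
Proof.
  intros _ H. unfold Gamma. change (fun t => Rpower t (x - 1) * exp (- t)) with (fpow (x - 1)).
  apply (is_RInt_gen_unique (V := R_CompleteNormedModule)). exact H.
Qed.

Lemma gamma_ratio a : 0 < a -> Gamma (a+3) / Gamma (a+1) = (a+2)*(a+1).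
Proof.
  intros Ha.
  destruct (fpow_gen_ex a ltac:(lra)) as [v Hv].
  assert (Hpos := fpow_gen_pos a v ltac:(lra) Hv).
  assert (H1 := fpow_rec a v ltac:(lra) Hv).
  assert (H2 := fpow_rec (a+1) _ ltac:(lra) H1).
  rewrite (Gamma_fpow (a+1) v). rewrite (Gamma_fpow (a+3) ((a+1+1)*((a+1)*v))).
  field. lra.
  lra. replace (a+3-1) with (a+1+1) by ring. exact H2.
  lra. replace (a+1-1) with a by ring. exact Hv.
Qed.


Lemma telesc (v : nat -> R) : is_lim_seq v 0 -> is_series (fun k => v k - v (S k)) (v O).
Proof.
  intros Hv.
  assert (E : forall K, sum_n (fun k => v k - v (S k)) K = v O - v (S K)).
  { induction K. rewrite sum_O. reflexivity. rewrite sum_Sn, IHK. unfold plus; simpl. ring. }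
  unfold is_series. change (is_lim_seq (sum_n (fun k => v k - v (S k))) (v O)).
  apply is_lim_seq_ext with (fun K => v O - v (S K)). intros; symmetry; apply E.
  assert (H := is_lim_seq_minus' _ _ _ _ (is_lim_seq_const (v O)) (proj1 (is_lim_seq_incr_1 v 0) Hv)).
  rewrite Rminus_0_r in H. exact H.
Qed.

Lemma exp_series z : is_series (fun k => z ^ k / INR (fact k)) (exp z).
Proof.
  assert (H := is_exp_Reals z). unfold is_pseries in H.
  eapply is_series_ext. 2: exact H. intros k. simpl. rewrite pow_n_pow.
  change (scal (z^k) (/ INR (fact k))) with (z^k * / INR (fact k)). reflexivity.
Qed.

Lemma exp_tail z l : is_series (fun k => z ^ (l + 1 + k) / INR (fact (l + 1 + k)))
  (exp z - sum_f_R0 (fun j => z ^ j / INR (fact j)) l).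
Proof.
  apply (is_series_incr_n (fun k => z ^ k / INR (fact k)) (l+1)). lia.
  replace (Init.Nat.pred (l+1)) with l by lia.
  rewrite sum_n_Reals. unfold plus; simpl.
  replace (exp z - sum_f_R0 (fun j : nat => z ^ j / INR (fact j)) l +
   sum_f_R0 (fun k : nat => z ^ k / INR (fact k)) l) with (exp z) by ring.
  apply exp_series.
Qed.

Definition uu z m := z ^ m / (INR (fact m) * (INR m + 1 - z)).

Lemma uu_lim z l : 0 < z < 1 -> is_lim_seq (fun k => uu z (l + k)) 0.
Proof.
  intros Hz.
  assert (H0 : is_lim_seq (fun k => z ^ k / INR (fact k)) 0).
  { apply ex_series_lim_0. eexists. apply exp_series. }
  assert (H1 : is_lim_seq (uu z) 0).
  { apply is_lim_seq_le_le with (fun _ => 0) (fun k => / (1 - z) * (z ^ k / INR (fact k))).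
    - intros k. unfold uu.
      assert (Hf := INR_fact_lt_0 k). assert (Hk := pos_INR k).
      assert (Hp : 0 < z ^ k) by (apply pow_lt; lra).
      split. left. apply Rdiv_lt_0_compat; auto. apply Rmult_lt_0_compat; lra.
      unfold Rdiv. rewrite Rinv_mult.
      replace (/ (1 - z) * (z ^ k * / INR (fact k))) with (z ^ k * / INR (fact k) * / (1 - z)) by ring.
      replace (z ^ k * (/ INR (fact k) * / (INR k + 1 - z))) with (z ^ k * / INR (fact k) * / (INR k + 1 - z)) by ring.
      apply Rmult_le_compat_l. left. apply Rmult_lt_0_compat; auto. apply Rinv_0_lt_compat; auto.
      apply Rinv_le_contravar; lra.
    - apply is_lim_seq_const.
    - replace (Finite 0) with (Rbar_mult (/ (1 - z)) 0) by (simpl; f_equal; ring).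
      apply is_lim_seq_scal_l. exact H0. }
  apply is_lim_seq_ext with (fun k => uu z (k + l)). intros; f_equal; lia.
  apply (is_lim_seq_incr_n (uu z) l 0). exact H1.
Qed.

Lemma core_term z l k : 0 < z < 1 ->
  z ^ k / ((INR (l + 1 + k) - z) * (INR (l + 1 + k) + 1 - z) * INR (fact (l + 1 + k)))
  = / z ^ (l + 1) * ((uu z (l + k) - uu z (l + S k)) - / z * (z ^ (l + 1 + k) / INR (fact (l + 1 + k)))).
Proof.
  intros Hz. unfold uu.
  replace (l + 1 + k)%nat with (S (l + k)) by lia.
  replace (l + S k)%nat with (S (l + k)) by lia.
  rewrite !S_INR, plus_INR. rewrite fact_simpl, mult_INR, S_INR, plus_INR.
  rewrite !pow_add. simpl.
  assert (Hf := INR_fact_lt_0 (l + k)). assert (Hl := pos_INR l). assert (Hk := pos_INR k).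

  assert (0 < z ^ l) by (apply pow_lt; lra). assert (0 < z ^ k) by (apply pow_lt; lra).
  rewrite !pow_add.
  assert (INR l + INR k + 1 - z <> 0) by lra.
  assert (INR l + INR k + 1 + 1 - z <> 0) by lra.
  assert (INR l + INR k + 1 <> 0) by lra.
  field. repeat split; lra.
Qed.


Lemma core_series z l : 0 < z < 1 ->
  is_series (fun k => z ^ k / ((INR (l + 1 + k) - z) * (INR (l + 1 + k) + 1 - z) * INR (fact (l + 1 + k))))
    (/ z ^ (l + 1) * (uu z l - / z * (exp z - sum_f_R0 (fun j => z ^ j / INR (fact j)) l))).
Proof.
  intros Hz.
  assert (T := telesc (fun k => uu z (l + k)) (uu_lim z l Hz)). simpl in T. rewrite Nat.add_0_r in T.
  assert (E := is_series_scal_l (/ z) _ _ (exp_tail z l)).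
  assert (M := is_series_minus _ _ _ _ T E).
  assert (S := is_series_scal_l (/ z ^ (l + 1)) _ _ M).
  eapply is_series_ext. intros k. symmetry. apply core_term. exact Hz.
  exact S.
Qed.

Lemma poch1 k : poch 1 k = INR (fact k).
Proof. induction k. reflexivity. simpl poch. rewrite IHk. rewrite fact_simpl, mult_INR, S_INR. ring. Qed.

Lemma pochA a k : poch (a + 1) k * ((a + 1 + INR k) * (a + 2 + INR k)) = (a + 1) * (a + 2) * poch (a + 3) k.
Proof.
  induction k. simpl. ring.
  simpl poch. rewrite S_INR.
  transitivity ((poch (a+1) k * ((a+1+INR k)*(a+2+INR k))) * (a+3+INR k)). ring.
  rewrite IHk. ring.
Qed.

Lemma pochL l k : poch (INR l + 2) k * INR (fact (l + 1)) = INR (fact (l + 1 + k)).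
Proof.
  induction k. simpl. rewrite Nat.add_0_r. ring.
  replace (l + 1 + S k)%nat with (S (l + 1 + k)) by lia.
  rewrite fact_simpl, mult_INR, <- IHk. simpl poch.
  rewrite S_INR, !plus_INR. simpl. ring.
Qed.

Lemma poch_pos b k : 0 < b -> 0 < poch b k.
Proof.
  intros Hb. induction k. simpl; lra. simpl. apply Rmult_lt_0_compat; auto.
  assert (H := pos_INR k). lra.
Qed.

Lemma pow_div' x y k : y <> 0 -> (x / y) ^ k = x ^ k / y ^ k.
Proof. intros. unfold Rdiv. rewrite Rpow_mult_distr, pow_inv. reflexivity. Qed.


Theorem lemma4p2 (l n : nat) (hl : (1 <= l)%nat) (hln : (l < n)%nat) :
  let L := INR l in
  let N := INR n in
  let a := (N - 1) / N * L in
  hyp2F2 (a + 1) 1 (L + 2) (a + 3) (L / N)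
  = INR (fact (l + 1)) * (N ^ (l + 1) / L ^ (l + 1))
    * (Gamma (a + 3) / Gamma (a + 1))
    * ( N / L * (sum_f_R0 (fun k => L ^ k / (INR (fact k) * N ^ k)) l - exp (L / N))
        + L ^ (l - 1) / (INR (fact (l - 1)) * N ^ (l - 1))
          * (1 / ((N + 1) * (L + 1) - 1 - 2 * L)) ).
Proof.
  intros L N a.
  assert (HL : 1 <= L) by (apply (le_INR 1 l) in hl; simpl in hl; exact hl).
  assert (HLN : L < N) by (apply lt_INR; exact hln).
  set (z := L / N).
  assert (Hz : 0 < z < 1).
  { unfold z. split. apply Rdiv_lt_0_compat; lra.
    apply (Rmult_lt_reg_r N). lra. field_simplify; lra. }
  assert (Ha : a = L - z) by (unfold a, z; field; lra).
  assert (Hapos : 0 < a) by lra.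
  rewrite (gamma_ratio a Hapos).
  set (Ssum := sum_f_R0 (fun j => z ^ j / INR (fact j)) l).
  assert (HS : sum_f_R0 (fun k => L ^ k / (INR (fact k) * N ^ k)) l = Ssum).
  { unfold Ssum. apply sum_eq. intros i _. unfold z. rewrite pow_div' by lra.
    assert (0 < N ^ i) by (apply pow_lt; lra). assert (Hf := INR_fact_lt_0 i). field. lra. }
  rewrite HS.
  unfold hyp2F2.
  rewrite (is_series_unique _ ((a + 1) * (a + 2) * INR (fact (l + 1)) *
     (/ z ^ (l + 1) * (uu z l - / z * (exp z - Ssum))))).
  2:{ apply (is_series_ext (fun k => (a + 1) * (a + 2) * INR (fact (l + 1)) *
          (z ^ k / ((INR (l + 1 + k) - z) * (INR (l + 1 + k) + 1 - z) * INR (fact (l + 1 + k)))))).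
      2: exact (is_series_scal_l (K:=R_AbsRing) (V:=R_NormedModule) ((a + 1) * (a + 2) * INR (fact (l + 1))) _ _ (core_series z l Hz)).
      intros k.
      rewrite poch1.
      assert (E1 := pochA a k). assert (E2 := pochL l k).
      assert (P3 := poch_pos (a + 3) k ltac:(lra)).
      assert (PL := poch_pos (L + 2) k ltac:(lra)).
      assert (Hk := pos_INR k).
      assert (Hf := INR_fact_lt_0 k). assert (Hf1 := INR_fact_lt_0 (l + 1)).
      replace (poch (a + 1) k) with ((a + 1) * (a + 2) * poch (a + 3) k / ((a + 1 + INR k) * (a + 2 + INR k))).
      2:{ rewrite <- E1. field. split; lra. }
      rewrite <- E2. fold L.
      rewrite !plus_INR. simpl INR. fold L.
      rewrite Ha.
      match goal with |- ?x = ?y => change (@eq R x y) end. rewrite Ha in P3. field. repeat split; lra. }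
  assert (HN : 0 < N) by lra.
  assert (HD : (N + 1) * (L + 1) - 1 - 2 * L <> 0) by nra.
  assert (Hzl : L + 1 - z <> 0) by lra.
  rewrite Ha.
  unfold uu. unfold z in *. clearbody Ssum. clear HS.
  assert (HLd : INR l = L) by reflexivity. clearbody a L N.
  destruct l as [|l']. lia.
  replace (S l' - 1)%nat with l' by lia.
  replace (S l' + 1)%nat with (S (S l')) by lia.
  rewrite (fact_simpl l'). rewrite mult_INR.
  rewrite !pow_div' by lra.
  rewrite <- !tech_pow_Rmult.
  assert (0 < L ^ l') by (apply pow_lt; lra).
  assert (0 < N ^ l') by (apply pow_lt; lra).
  assert (Hf := INR_fact_lt_0 l').
  assert (Hf2 := INR_fact_lt_0 (S (S l'))).
  rewrite HLd.
  field. repeat split; lra.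
Qed.
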